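(* Let $X=[n]$, $\mathcal{A}\subseteq X^{(r)}$ and $\mathcal{B}=X^{(r)}\setminus\mathcal{A}$. Suppose that $\partial^{-t}\mathcal{A}$ and $\partial^{+t}\mathcal{B}$ are minimal for all integers $t>0$. Then $\mathcal{A}$ is isomorphic to an initial segment of the colexicographic order on $X^{(r)}$.
   Context: $X^{(r)}=\{B\subseteq[n]:|B|=r\}$. Lower shadow: $\partial\mathcal{F}=\partial^{-}\mathcal{F}=\{B: B\cup\{i\}\in\mathcal{F}\text{ for some } i\notin B\}$, and $\partial^{-t}\mathcal{F}=\partial(\partial^{-(t-1)}\mathcal{F})$. Upper shadow: $\partial^{+}\mathcal{F}=\{B\cup\{i\}: i\in[n]\setminus B,\ B\in\mathcal{F}\}$, and $\partial^{+t}\mathcal{F}=\partial^{+}(\partial^{+(t-1)}\mathcal{F})$. For $\mathcal{F}\subseteq X^{(r)}$, $\partial^{\pm t}\mathcal{F}$ is minimal if $|\partial^{\pm t}\mathcal{F}|\le|\partial^{\pm t}\mathcal{G}|$ for every $\mathcal{G}\subseteq X^{(r)}$ with $|\mathcal{G}|=|\mathcal{F}|$. Colexicographic order: $A<_{colex}B$ iff $\max(A\Delta B)\in B$. $\mathcal{A}$ is isomorphic to $\mathcal{C}$ if there is a permutation $\sigma$ of $[n]$ with $\{\sigma(A):A\in\mathcal{A}\}=\mathcal{C}$. *)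

(* Defs.v *)
From mathcomp Require Import all_boot all_fingroup.
Set Implicit Arguments. Unset Strict Implicit. Unset Printing Implicit Defensive.

(* Ground set X = [n] is modelled as 'I_n (elements 0..n-1). *)
Section Defs.
Variable n : nat.
Local Notation fam := {set {set 'I_n}}.

Definition layer (r : nat) : fam := [set B : {set 'I_n} | #|B| == r].

Definition lshadow (F : fam) : fam :=
  [set B : {set 'I_n} | [exists i : 'I_n, (i \notin B) && (B :|: [set i] \in F)]].

Definition ushadow (F : fam) : fam :=
  [set C : {set 'I_n} | [exists B in F, exists i : 'I_n,
      (i \notin B) && (C == B :|: [set i])]].

Definition lshadow_iter (t : nat) (F : fam) : fam := iter t lshadow F.
Definition ushadow_iter (t : nat) (F : fam) : fam := iter t ushadow F.

Definition lshadow_minimal (r t : nat) (F : fam) : Prop :=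
  forall G : fam, G \subset layer r -> #|G| = #|F| ->
    #|lshadow_iter t F| <= #|lshadow_iter t G|.

Definition ushadow_minimal (r t : nat) (F : fam) : Prop :=
  forall G : fam, G \subset layer r -> #|G| = #|F| ->
    #|ushadow_iter t F| <= #|ushadow_iter t G|.

Definition colex_lt (A B : {set 'I_n}) : bool :=
  [exists x : 'I_n, [&& x \in B, x \notin A &
     [forall y : 'I_n, (y \in (A :\: B) :|: (B :\: A)) ==> (y <= x)%N]]].

Definition colex_initial_segment (r : nat) (C : fam) : Prop :=
  C \subset layer r /\
  forall B D : {set 'I_n}, B \in C -> D \in layer r -> colex_lt D B -> D \in C.

Definition fam_isomorphic (A C : fam) : Prop :=
  exists s : {perm 'I_n}, [set [set s x | x in B] | B : {set 'I_n} in A] = C.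
End Defs.

(* Main.v *)
Require Import Defs.
From mathcomp Require Import all_boot all_fingroup zify.
Set Implicit Arguments. Unset Strict Implicit. Unset Printing Implicit Defensive.

Ltac gen_cards := repeat match goal with |- context [#|?A|] => let x := fresh "cx" in move: #|A| => x end.
Ltac clia := gen_cards; repeat match goal with H : _ |- _ => clear H end; lia.

Lemma sub_card_ex (T : finType) (F : {set T}) m :
  m <= #|F| -> exists G : {set T}, G \subset F /\ #|G| = m.
Proof.
move=> hm.
have : 0 < #|[set G : {set T} | G \subset F & #|G| == m]|.
  by rewrite cards_draws bin_gt0.
case/card_gt0P => G; rewrite inE => /andP [h1 /eqP h2]; by exists G.
Qed.

Lemma cardsDsub (T : finType) (a D : {set T}) :
  D \subset a -> #|a :\: D| = #|a| - #|D|.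
Proof. by move=> h; rewrite cardsD (setIidPr h). Qed.

Lemma cardsU_disj (T : finType) (A B : {set T}) :
  A :&: B = set0 -> #|A :|: B| = #|A| + #|B|.
Proof. by move=> h; rewrite -cardsUI h cards0 addn0. Qed.

Lemma perm_to (T : finType) (X Y : {set T}) :
  #|X| = #|Y| -> exists s : {perm T}, [set s x | x in X] = Y.
Proof.
move=> hXY; move: hXY (erefl #|X|); move: {2}#|X| => k.
elim: k X Y => [|k IH] X Y hY hX.
  exists 1%g; move/esym/eqP: (hX); rewrite cards_eq0 => /eqP X0.
  move: hY; rewrite -hX => /esym/eqP; rewrite cards_eq0 => /eqP ->.
  by rewrite X0 imset0.
have /card_gt0P [x xX] : 0 < #|X| by rewrite -hX.
have /card_gt0P [y yY] : 0 < #|Y| by rewrite -hY -hX.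
have h1 : #|X :\ x| = k by move: hX; rewrite (cardsD1 x) xX; case.
have h2 : #|Y :\ y| = k by move: hY; rewrite -hX (cardsD1 y) yY; case.
have [s hs] := IH _ _ (etrans h1 (esym h2)) (esym h1).
exists (s * tperm (s x) y)%g.
rewrite -(setD1K xX) imsetU1 permM tpermL.
have -> : [set (s * tperm (s x) y)%g x0 | x0 in X :\ x] = Y :\ y.
  rewrite -hs; apply: eq_in_imset => z zX; rewrite permM tpermD //.
    by apply/negP => /eqP /perm_inj e; move: zX; rewrite e !inE eqxx.
  apply/negP => /eqP e; have : s z \in [set s x | x in X :\ x] by apply: imset_f.
  by rewrite hs -e !inE eqxx.
by rewrite setD1K.
Qed.
Section Gen.
Variable N : nat.
Local Notation fam := {set {set 'I_N}}.

Definition layerX (X : {set 'I_N}) r : fam := [set B : {set 'I_N} | B \subset X & #|B| == r].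
Definition ushX (X : {set 'I_N}) (F : fam) : fam := [set C in ushadow F | C \subset X].

Lemma lsh_iterE t (F : fam) :
  iter t (@lshadow N) F = [set D : {set 'I_N} | [exists a in F, (D \subset a) && (#|a :\: D| == t)]].
Proof.
elim: t => [|t IH] /=.
  apply/setP => D; rewrite inE; apply/idP/existsP => [DF|[a /and3P [aF Da c]]].
    by exists D; rewrite DF subxx setDv cards0.
  suff -> : D = a by [].
  apply/eqP; rewrite eqEcard Da /=; move: c; rewrite cardsDsub //; clia.
apply/setP => D; rewrite /lshadow IH !inE; apply/existsP/existsP.
  move=> [i /andP [iD]]; rewrite inE => /existsP [a /and3P [aF Da c]].
  exists a; rewrite aF /=.
  have Dsa : D \subset a by apply: subset_trans Da; apply: subsetUl.
  have ia : i \in a by apply: (subsetP Da); rewrite !inE eqxx orbT.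
  rewrite Dsa /=; move: c; rewrite !cardsDsub // (setUC _ [set _]) cardsU1 iD /=.
  have hc := subset_leq_card Da; rewrite (setUC _ [set _]) cardsU1 iD /= in hc; move: hc; clia.
move=> [a /and3P [aF Da c]].
have : 0 < #|a :\: D| by rewrite (eqP c).
case/card_gt0P => i; rewrite inE => /andP [iD ia].
exists i; rewrite iD inE /=; apply/existsP; exists a; rewrite aF /=.
rewrite subUset Da sub1set ia /=.
rewrite cardsDsub ?subUset ?Da ?sub1set ?ia // (setUC _ [set _]) cardsU1 iD /=.
move: c; rewrite cardsDsub //. clia.
Qed.

Lemma ush_iterE (X : {set 'I_N}) t (F : fam) : (forall b, b \in F -> b \subset X) ->
  iter t (ushX X) F = [set C : {set 'I_N} | (C \subset X) && [exists b in F, (b \subset C) && (#|C :\: b| == t)]].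
Proof.
move=> FX; elim: t => [|t IH] /=.
  apply/setP => D; rewrite inE; apply/idP/andP => [DF|[DX /existsP [a /and3P [aF Da c]]]].
    by split; [apply: FX | apply/existsP; exists D; rewrite DF subxx setDv cards0].
  suff -> : D = a by [].
  apply/eqP; rewrite eq_sym eqEcard Da /=; move: c; rewrite cardsDsub //; clia.
apply/setP => C; rewrite /ushX /ushadow IH !inE; apply/andP/andP.
  move=> [/existsP [B /andP [BF /existsP [i /andP [iB /eqP CE]]]] CX].
  move: BF; rewrite inE => /andP [BX /existsP [b /and3P [bF bB c]]].
  split => //; apply/existsP; exists b; rewrite bF /=.
  have bC : b \subset C by rewrite CE; apply: subset_trans bB (subsetUl _ _).
  rewrite bC /= CE cardsDsub ?(subset_trans bB (subsetUl _ _)) // (setUC _ [set _]) cardsU1 iB /=.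
  have := subset_leq_card bB; move: c; rewrite cardsDsub //; clia.
move=> [CX /existsP [b /and3P [bF bC c]]].
have : 0 < #|C :\: b| by rewrite (eqP c).
case/card_gt0P => i; rewrite inE => /andP [ib iC].
split => //; apply/existsP; exists (C :\ i); rewrite inE.
have bCi : b \subset C :\ i.
  apply/subsetP => z zb; rewrite !inE (subsetP bC) // andbT.
  by apply/negP => /eqP ez; move: ib; rewrite -ez zb.
apply/andP; split.
  rewrite (subset_trans _ CX) ?subD1set //=; apply/existsP; exists b; rewrite bF bCi /=.
  rewrite cardsDsub // (cardsD1 i C) iC in c; rewrite cardsDsub //; move: c => /=; clia.
apply/existsP; exists i; rewrite !inE eqxx /= (setUC _ [set _]) setD1K //.
Qed.

End Gen.

Section Colex.
Variable N : nat.
Local Notation fam := {set {set 'I_N}}.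
Definition ordlt k : {set 'I_N} := [set i : 'I_N | i < k].

Lemma colex_sub m (D E : {set 'I_N}) : colex_lt D E -> E \subset ordlt m -> D \subset ordlt m.
Proof.
move=> /existsP [x /and3P [xE xD /forallP H]] Em; apply/subsetP => y yD.
case yE: (y \in E); first by apply: (subsetP Em).
have := H y; rewrite !inE yD yE /= => hyx.
have := subsetP Em x xE; rewrite !inE => hx; apply: leq_ltn_trans hyx hx.
Qed.

Lemma colex_D1 z (D E : {set 'I_N}) : z \in D -> z \in E -> colex_lt D E -> colex_lt (D :\ z) (E :\ z).
Proof.
move=> zD zE /existsP [x /and3P [xE xD /forallP H]].
have xz : x != z by apply/negP => /eqP e; move: xD; rewrite e zD.
apply/existsP; exists x; rewrite !inE xz xE xD /=; apply/forallP => y; apply/implyP => hy.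
apply: (implyP (H y)); move: hy; rewrite !inE.
by case: (y == z) => //=.
Qed.

Lemma init_layer m r : colex_initial_segment r (layerX (ordlt m) r).
Proof.
split.
  by apply/subsetP => B; rewrite !inE => /andP [].
move=> B D; rewrite !inE => /andP [Bm _] Dr hlt; rewrite Dr andbT.
exact: colex_sub hlt Bm.
Qed.

Lemma init_ext m (hm : m < N) r (C' : fam) : colex_initial_segment r C' ->
  (forall e, e \in C' -> e \subset ordlt m) ->
  colex_initial_segment r.+1 (layerX (ordlt m) r.+1 :|: [set (Ordinal hm) |: e | e in C']).
Proof.
set z := Ordinal hm => [[Csub Cdown]] Cm.
have zm : forall e, e \in C' -> z \notin e.
  move=> e eC; apply/negP => ze; have := subsetP (Cm e eC) z ze; by rewrite inE ltnn.
have Bsub : forall B, B \in layerX (ordlt m) r.+1 :|: [set z |: e | e in C'] -> B \subset ordlt m.+1.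
  move=> B; rewrite !inE => /orP [/andP [Bm _]|/imsetP [e eC ->]].
    apply: subset_trans Bm _; apply/subsetP => i; rewrite !inE; apply: ltnW.
  apply/subsetP => i; rewrite !inE => /orP [/eqP ->|ie] //.
  by have := subsetP (Cm e eC) i ie; rewrite inE => h; apply: ltnW.
split.
  apply/subsetP => B; rewrite !inE => /orP [/andP [_ ->]//|/imsetP [e eC ->]].
  have := subsetP Csub e eC; rewrite inE cardsU1 (negbTE (zm e eC)) => /eqP -> //.
move=> B D BF; rewrite inE => Dr hlt.
have Dm1 := colex_sub hlt (Bsub B BF).
case zD: (z \in D).
  move: BF; rewrite inE => /orP [|/imsetP [e eC Be]].
    rewrite inE => /andP [Bm _]; have := subsetP (colex_sub hlt Bm) z zD.
    by rewrite inE ltnn.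
  have zB : z \in B by rewrite Be !inE eqxx.
  have := colex_D1 zD zB hlt.
  have -> : B :\ z = e.
    rewrite Be; apply/setP => i; rewrite !inE.
    case iz: (i == z) => //=; first by rewrite (eqP iz) (negbTE (zm e eC)).
  move=> hlt'.
  have De : D :\ z \in C'.
    apply: (Cdown e) => //; rewrite inE.
    move: Dr; rewrite (cardsD1 z D) zD /= add1n eqSS => //.
  apply/setUP; right; apply/imsetP; exists (D :\ z) => //; by rewrite setD1K.
apply/setUP; left; rewrite inE Dr andbT; apply/subsetP => i iD.
have := subsetP Dm1 i iD; rewrite !inE ltnS leq_eqVlt => /orP [/eqP e|] //.
have : i = z by apply: val_inj; rewrite /= e.
by move=> eiz; move: zD; rewrite -eiz iD.
Qed.
End Colex.

Section Main.
Variable N : nat.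
Local Notation fam := {set {set 'I_N}}.

Definition hypL (X : {set 'I_N}) r (A : fam) := forall t, 0 < t -> forall G : fam,
  G \subset layerX X r -> #|G| = #|A| -> #|iter t (@lshadow N) A| <= #|iter t (@lshadow N) G|.
Definition hypU (X : {set 'I_N}) r (A : fam) := forall t, 0 < t -> forall G : fam,
  G \subset layerX X r -> #|G| = #|layerX X r :\: A| ->
  #|iter t (ushX X) (layerX X r :\: A)| <= #|iter t (ushX X) G|.

Lemma card_layerX (X : {set 'I_N}) r : #|layerX X r| = 'C(#|X|, r).
Proof. by rewrite -cards_draws. Qed.

Lemma layerX_sub (X Y : {set 'I_N}) r : X \subset Y -> layerX X r \subset layerX Y r.
Proof.
move=> XY; apply/subsetP => B; rewrite !inE => /andP [BX ->]; by rewrite (subset_trans BX XY).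
Qed.

Lemma exists_free (X : {set 'I_N}) k r (A : fam) : #|X| = k.+1 -> A \subset layerX X r.+1 ->
  hypL X r.+1 A -> #|A| <= 'C(k, r.+1) ->
  exists2 x, x \in X & forall a, a \in A -> x \notin a.
Proof.
move=> hX hA hL hc.
case: (pickP [pred x | (x \in X) && [forall a in A, x \notin a]]) => [x /andP [xX /forall_inP H]|H].
  by exists x.
have S_sub : [set [set y] | y in X] \subset iter r (@lshadow N) A.
  apply/subsetP => D /imsetP [y yX ->].
  have := H y; rewrite /= yX /= => /negbT /forall_inPn [a aA]; rewrite negbK => ya.
  rewrite lsh_iterE inE; apply/existsP; exists a; rewrite aA sub1set ya /=.
  have := subsetP hA a aA; rewrite inE => /andP [_ ca].
  rewrite cardsDsub ?sub1set // cards1; move: ca; clia.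
have lb : k.+1 <= #|iter r (@lshadow N) A|.
  by rewrite -hX -(card_imset _ set1_inj); exact: subset_leq_card S_sub.
suff : #|iter r (@lshadow N) A| <= k by move=> h; have := leq_trans lb h; rewrite ltnn.
case: r hA hL hc {S_sub lb} => [|r'] hA hL hc.
  by move: hc; rewrite bin1.
have /card_gt0P [x0 x0X] : 0 < #|X| by rewrite hX.
set X' := X :\ x0.
have hX' : #|X'| = k by move: hX; rewrite (cardsD1 x0) x0X; case.
have [G [GS Gc]] : exists G : fam, G \subset layerX X' r'.+2 /\ #|G| = #|A|.
  by apply: sub_card_ex; rewrite card_layerX hX'.
have GX : G \subset layerX X r'.+2 by apply: subset_trans GS (layerX_sub _ (subD1set _ _)).
apply: leq_trans (hL r'.+1 isT G GX Gc) _.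
rewrite -hX' -(card_imset (mem X') set1_inj); apply: subset_leq_card.
apply/subsetP => D; rewrite lsh_iterE inE => /existsP [g /and3P [gG Dg c]].
have := subsetP GS g gG; rewrite inE => /andP [gX' cg].
have : #|D| == 1 by move: c cg; rewrite cardsDsub //; have := subset_leq_card Dg; clia.
case/cards1P => y Dy; apply/imsetP; exists y => //.
by apply: (subsetP gX'); apply: (subsetP Dg); rewrite Dy set11.
Qed.


Lemma exists_common (X : {set 'I_N}) k r (A : fam) : #|X| = k.+1 -> A \subset layerX X r.+1 ->
  hypU X r.+1 A -> 'C(k, r.+1) < #|A| -> A != set0 -> layerX X r.+1 :\: A != set0 ->
  exists2 x, x \in X & forall b, b \in layerX X r.+1 :\: A -> x \in b.
Proof.
move=> hX hA hU hc An Bn; set B := layerX X r.+1 :\: A.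
case: (pickP [pred x | (x \in X) && [forall b in B, x \in b]]) => [x /andP [xX /forall_inP H]|H].
  by exists x.
have BX : forall b, b \in B -> b \subset X.
  by move=> b; rewrite !inE => /and3P [_ ? _].
have Bc : forall b, b \in B -> #|b| = r.+1.
  by move=> b; rewrite !inE => /and3P [_ _ /eqP].
have [b0 b0B] : exists b0, b0 \in B by apply/set0Pn.
have [a0 a0A] : exists a0, a0 \in A by apply/set0Pn.
have rk : r < k.
  have := subset_leq_card (BX b0 b0B); rewrite Bc // hX ltnS leq_eqVlt => /orP [/eqP er|//].
  have b0X : b0 = X by apply/eqP; rewrite eqEcard BX //= hX Bc // er.
  have := subsetP hA a0 a0A; rewrite inE => /andP [a0X ca0].
  have a0X' : a0 = X by apply/eqP; rewrite eqEcard a0X /= hX (eqP ca0) er.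
  by move: b0B; rewrite /B inE b0X -a0X' a0A.
set t0 := k - r.+1.
have S_sub : [set X :\ y | y in X] \subset iter t0 (ushX X) B.
  apply/subsetP => C /imsetP [y yX ->].
  have := H y; rewrite /= yX /= => /negbT /forall_inPn [b bB yb].
  rewrite ush_iterE // inE subD1set /=; apply/existsP; exists b; rewrite bB /=.
  have bXy : b \subset X :\ y.
    apply/subsetP => z zb; rewrite !inE (subsetP (BX b bB)) // andbT.
    by apply/negP => /eqP ez; move: yb; rewrite -ez zb.
  rewrite bXy cardsDsub //.
  have : #|X :\ y| = k by move: hX; rewrite (cardsD1 y) yX; case.
  move: (Bc b bB); rewrite /t0; clia.
have lb : k.+1 <= #|iter t0 (ushX X) B|.
  rewrite -hX -(card_in_imset (f := fun y => X :\ y)); first exact: subset_leq_card S_sub.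
  move=> y z yX zX e; apply/eqP; apply/negP => nyz.
  have : y \in X :\ z by rewrite !inE yX andbT eq_sym; apply/negP => /eqP e'; move: nyz; rewrite e' eqxx.
  by rewrite -e !inE eqxx.
suff : #|iter t0 (ushX X) B| <= k by move=> h; have := leq_trans lb h; rewrite ltnn.
have cB : #|B| < 'C(k, r).
  have : #|B| = 'C(k.+1, r.+1) - #|A|.
    by rewrite /B cardsD (setIidPr hA) card_layerX hX.
  have : 0 < 'C(k, r) by rewrite bin_gt0 ltnW.
  move: hc; rewrite binS; clia.
case t0E : t0 => [|t0'].
  have erk : r.+1 = k by move: t0E rk; rewrite /t0; clia.
  rewrite /=; move: cB; rewrite -erk binSn; clia.
have /card_gt0P [x0 x0X] : 0 < #|X| by rewrite hX.
set X' := X :\ x0.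
have hX' : #|X'| = k by move: hX; rewrite (cardsD1 x0) x0X; case.
set Hs := layerX X r.+1 :\: layerX X' r.+1.
have cH : #|Hs| = 'C(k, r).
  rewrite /Hs cardsD (setIidPr (layerX_sub _ (subD1set _ _))) !card_layerX hX hX' binS; clia.
have [G [GS Gc]] : exists G : fam, G \subset Hs /\ #|G| = #|B|.
  by apply: sub_card_ex; rewrite cH ltnW.
have GX : G \subset layerX X r.+1 by apply: subset_trans GS (subsetDl _ _).
have GXs : forall g, g \in G -> g \subset X.
  by move=> g /(subsetP GX); rewrite inE => /andP [].
apply: leq_trans (hU t0'.+1 isT G GX Gc) _.
rewrite -hX' -(card_in_imset (D := mem X') (f := fun y => X :\ y)); last first.
  move=> y z /= yX zX e; apply/eqP; apply/negP => nyz.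
  have yX1 : y \in X by move: yX; rewrite inE => /andP [].
  have : y \in X :\ z by rewrite !inE yX1 andbT eq_sym; apply/negP => /eqP e'; move: nyz; rewrite e' eqxx.
  by rewrite -e !inE eqxx.
apply: subset_leq_card; apply/subsetP => C.
rewrite ush_iterE // inE => /andP [CX /existsP [g /and3P [gG gC c]]].
have := subsetP GS g gG; rewrite !inE => /andP [ngX' /andP [gX cg]].
have x0g : x0 \in g.
  apply/negP => nx0; move: ngX'; rewrite cg andbT => /negP; apply.
  apply/subsetP => z zg; rewrite !inE (subsetP gX) // andbT.
  by apply/negP => /eqP ez; move: nx0; rewrite -ez zg.
have cC : #|C| = k.
  have := subset_leq_card gC; move: c t0E; rewrite cardsDsub // /t0 (eqP cg). clia.
have : #|X :\: C| == 1.
  rewrite cardsDsub // hX cC; clia.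
case/cards1P => y XCy.
have yXC : y \in X :\: C by rewrite XCy set11.
have yX : y \in X by move: yXC; rewrite inE => /andP [].
have yC : y \notin C by move: yXC; rewrite inE => /andP [].
apply/imsetP; exists y.
  rewrite /X' !inE yX andbT; apply/eqP => e; move: yC; rewrite e (subsetP gC) //.
apply/setP => i; rewrite !inE.
case iC: (i \in C).
  rewrite (subsetP CX i iC) andbT; apply/esym/negP => /eqP e; move: yC; by rewrite -e iC.
case iX: (i \in X); last by rewrite andbF.
have : i \in X :\: C by rewrite inE iC iX.
by rewrite XCy inE => ->.
Qed.

Lemma notX'_in (X : {set 'I_N}) x (b : {set 'I_N}) : b \subset X -> ~~ (b \subset X :\ x) -> x \in b.
Proof.
move=> bX nb; apply/negP => nx; move/negP: nb; apply.
apply/subsetP => z zb; rewrite !inE (subsetP bX) // andbT.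
by apply/negP => /eqP ez; move: nx; rewrite -ez zb.
Qed.

Lemma ush_split (X : {set 'I_N}) x r t (F' : fam) : x \in X -> F' \subset layerX (X :\ x) r.+1 ->
  #|iter t (ushX X) (F' :|: (layerX X r.+1 :\: layerX (X :\ x) r.+1))| =
  #|iter t (ushX (X :\ x)) F'| + #|[set C : {set 'I_N} | (C \subset X) && (x \in C) && (#|C| == r.+1 + t)]|.
Proof.
move=> xX hF.
set H := layerX X r.+1 :\: layerX (X :\ x) r.+1.
have F'X' : forall b, b \in F' -> b \subset X :\ x.
  by move=> b /(subsetP hF); rewrite inE => /andP [].
have F'c : forall b, b \in F' -> #|b| = r.+1.
  by move=> b /(subsetP hF); rewrite inE => /andP [_ /eqP].
have Hx : forall b, b \in H -> [/\ x \in b, b \subset X & #|b| = r.+1].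
  move=> b; rewrite !inE => /andP [nb /andP [bX /eqP cb]]; split => //.
  by apply: (notX'_in bX); move: nb; rewrite cb eqxx andbT.
have allX : forall b, b \in F' :|: H -> b \subset X.
  move=> b; rewrite inE => /orP [/F'X' h|/Hx [_ h _]] //; apply: subset_trans h (subD1set _ _).
rewrite -cardsU_disj.
  apply: eq_card => C.
  rewrite ush_iterE // ush_iterE // !inE.
  apply/andP/orP.
    move=> [CX /existsP [b /and3P [bFH bC c]]].
    case xC: (x \in C).
      right; rewrite CX /=.
      have cb : #|b| = r.+1 by move: bFH; rewrite inE => /orP [/F'c|/Hx [_ _]].
      have := subset_leq_card bC; move: c; rewrite cardsDsub // cb; clia.
    left; apply/andP; split.
      apply/subsetP => z zC; rewrite !inE (subsetP CX) // andbT.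
      by apply/negP => /eqP ez; move: xC; rewrite -ez zC.
    apply/existsP; exists b; rewrite bC c andbT.
    case/setUP: bFH => [->//|bH].
    have [xb _ _] := Hx b bH.
    by move: xC; rewrite (subsetP bC x xb).
  move=> [/andP [CX' /existsP [b /and3P [bF bC c]]]|/andP [/andP [CX xC] cC]].
    split; first by apply: subset_trans CX' (subD1set _ _).
    by apply/existsP; exists b; rewrite inE bF bC c.
  split => //.
  have [e [eC ce]] : exists e : {set 'I_N}, e \subset C :\ x /\ #|e| = r.
    apply: sub_card_ex; move: cC; rewrite (cardsD1 x C) xC; clia.
  have xe : x \notin e by apply/negP => /(subsetP eC); rewrite !inE eqxx.
  apply/existsP; exists (x |: e).
  have xeC : x |: e \subset C by rewrite subUset sub1set xC (subset_trans eC (subD1set _ _)).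
  rewrite xeC cardsDsub // cardsU1 xe ce /=.
  apply/andP; split; last by move: cC; clia.
  have nsub : ~~ (x |: e \subset X :\ x).
    by apply/negP => /subsetP /(_ x (setU11 x e)); rewrite !inE eqxx.
  apply/setUP; right; rewrite /H !inE (negbTE nsub) (subset_trans xeC CX) cardsU1 xe ce.
  by rewrite /= add1n eqxx.
apply/setP => C; rewrite !inE ush_iterE // inE.
apply/negP => /andP [/andP [CX' _] /andP [/andP [_ xC] _]].
by have := subsetP CX' x xC; rewrite !inE eqxx.
Qed.

Lemma reduce_free (X : {set 'I_N}) x r (A : fam) : x \in X -> A \subset layerX X r.+1 ->
  (forall a, a \in A -> x \notin a) -> hypL X r.+1 A -> hypU X r.+1 A ->
  [/\ A \subset layerX (X :\ x) r.+1, hypL (X :\ x) r.+1 A & hypU (X :\ x) r.+1 A].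
Proof.
move=> xX hA hx hL hU.
have sXX : layerX (X :\ x) r.+1 \subset layerX X r.+1 by apply: layerX_sub; apply: subD1set.
have hA' : A \subset layerX (X :\ x) r.+1.
  apply/subsetP => a aA; have := subsetP hA a aA; rewrite !inE => /andP [aX ->]; rewrite andbT.
  apply/subsetP => z za; rewrite !inE (subsetP aX) // andbT.
  by apply/negP => /eqP ez; move: (hx a aA); rewrite -ez za.
split => //.
  by move=> t t0 G GS Gc; apply: hL => //; apply: subset_trans GS sXX.
move=> t t0 G GS Gc.
set H := layerX X r.+1 :\: layerX (X :\ x) r.+1.
set B' := layerX (X :\ x) r.+1 :\: A.
have B'S : B' \subset layerX (X :\ x) r.+1 by apply: subsetDl.
have BE : layerX X r.+1 :\: A = B' :|: H.
  apply/setP => b; rewrite in_setU !in_setD.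
  case bA: (b \in A) => /=.
    by rewrite (subsetP hA' b bA).
  case bL: (b \in layerX (X :\ x) r.+1) => //=.
  by rewrite (subsetP sXX b bL).
have disj : forall F : fam, F \subset layerX (X :\ x) r.+1 -> F :&: H = set0.
  move=> F FS; apply/setP => b; rewrite in_setI in_setD in_set0.
  case bF: (b \in F) => //=; by rewrite (subsetP FS b bF).
have := hU t t0 (G :|: H).
rewrite BE !ush_split //.
move=> h; have := h _ _; rewrite leq_add2r; apply.
  rewrite subUset (subset_trans GS sXX) /H subsetDl //.
by rewrite !cardsU_disj ?disj // Gc.
Qed.

Lemma notin_sub (X e : {set 'I_N}) x : e \subset X :\ x -> x \notin e.
Proof. by move=> h; apply/negP => /(subsetP h); rewrite !inE eqxx. Qed.

Lemma addx_card x (F : fam) : (forall e, e \in F -> x \notin e) -> #|[set x |: e | e in F]| = #|F|.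
Proof.
move=> h; apply: card_in_imset => e1 e2 h1 h2 E.
by rewrite -(setU1K (h e1 h1)) -(setU1K (h e2 h2)) E.
Qed.

Lemma lsh_addx (X : {set 'I_N}) x r t (F' : fam) : F' \subset layerX (X :\ x) r ->
  r.+1 <= #|X :\ x| ->
  #|iter t (@lshadow N) (layerX (X :\ x) r.+1 :|: [set x |: e | e in F'])| =
  #|iter t (@lshadow N) (layerX (X :\ x) r.+1)| + #|iter t (@lshadow N) F'|.
Proof.
move=> hF hX.
set X' := X :\ x; set L := layerX X' r.+1.
have F'X : forall e, e \in F' -> e \subset X' /\ #|e| = r.
  by move=> e /(subsetP hF); rewrite inE => /andP [? /eqP].
have LX : forall a, a \in L -> a \subset X' /\ #|a| = r.+1.
  by move=> a; rewrite inE => /andP [? /eqP].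
have shF : forall d, d \in iter t (@lshadow N) F' -> x \notin d.
  move=> d; rewrite lsh_iterE inE => /existsP [e /and3P [eF de _]].
  apply/negP => /(subsetP de) xe; have [eX _] := F'X e eF.
  by move: (notin_sub eX); rewrite xe.
have shL : forall d, d \in iter t (@lshadow N) L -> x \notin d.
  move=> d; rewrite lsh_iterE inE => /existsP [e /and3P [eF de _]].
  apply/negP => /(subsetP de) xe; have [eX _] := LX e eF.
  by move: (notin_sub eX); rewrite xe.
rewrite -(addx_card shF) -cardsU_disj; last first.
  apply/setP => D; rewrite in_setI in_set0; apply/negbTE/negP => /andP [DL /imsetP [d _ Dd]].
  by move: (shL _ DL); rewrite Dd setU11.
apply: eq_card => D.
rewrite lsh_iterE in_setU lsh_iterE !inE.
apply/existsP/orP.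
  move=> [a /and3P [aU Da c]].
  case/setUP: aU => [aL|/imsetP [e eF ae]].
    by left; apply/existsP; exists a; rewrite aL Da c.
  have [eX ce] := F'X e eF.
  have xe := notin_sub eX.
  case xD: (x \in D).
    right; apply/imsetP; exists (D :\ x); last by rewrite setD1K.
    rewrite lsh_iterE inE; apply/existsP; exists e; rewrite eF /=.
    have De : D :\ x \subset e.
      apply/subsetP => z; rewrite !inE => /andP [zx zD].
      by move: (subsetP Da z zD); rewrite ae !inE (negbTE zx).
    rewrite De cardsDsub //.
    move: c; rewrite cardsDsub // ae cardsU1 xe ce (cardsD1 x D) xD.
    by have := subset_leq_card De; rewrite ce; clia.
  left.
  have De : D \subset e.
    apply/subsetP => z zD; move: (subsetP Da z zD); rewrite ae !inE => /orP [/eqP ez|//].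
    by move: xD; rewrite -ez zD.
  have : 0 < #|X' :\: e| by rewrite cardsDsub // ce; move: hX; clia.
  case/card_gt0P => y; rewrite inE => /andP [ye yX'].
  apply/existsP; exists (y |: e).
  have yeL : y |: e \in L by rewrite inE subUset sub1set yX' eX cardsU1 ye ce /= add1n.
  have Dye : D \subset y |: e by apply: subset_trans De (subsetU1 _ _).
  rewrite yeL Dye /= cardsDsub // cardsU1 ye ce.
  move: c; rewrite cardsDsub // ae cardsU1 xe ce; clia.
move=> [/existsP [a /and3P [aL Da c]]|/imsetP [d dF ->]].
  by exists a; rewrite in_setU aL Da c.
move: dF; rewrite lsh_iterE inE => /existsP [e /and3P [eF de c]].
have [eX ce] := F'X e eF.
have xe := notin_sub eX.
have xd : x \notin d by apply/negP => /(subsetP de); rewrite (negbTE xe).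
exists (x |: e).
have xdxe : x |: d \subset x |: e by rewrite setUS.
rewrite xdxe /= andbC; apply/andP; split; last first.
  by apply/setUP; right; apply/imsetP; exists e.
rewrite cardsDsub // !cardsU1 xe xd ce.
move: c; rewrite cardsDsub // ce; have := subset_leq_card de; rewrite ce; clia.
Qed.

Lemma ush_addx (X : {set 'I_N}) x t (F' : fam) : x \in X -> (forall e, e \in F' -> e \subset X :\ x) ->
  iter t (ushX X) [set x |: e | e in F'] = [set x |: c | c in iter t (ushX (X :\ x)) F'].
Proof.
move=> xX hF.
have hF2 : forall b, b \in [set x |: e | e in F'] -> b \subset X.
  move=> b /imsetP [e eF ->]; rewrite subUset sub1set xX.
  exact: subset_trans (hF e eF) (subD1set _ _).
apply/setP => C; rewrite ush_iterE // inE.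
apply/andP/imsetP.
  move=> [CX /existsP [b /andP [/imsetP [e eF ->] /andP [bC c]]]].
  have xe := notin_sub (hF e eF).
  have xC : x \in C by apply: (subsetP bC); rewrite setU11.
  exists (C :\ x); last by rewrite setD1K.
  have eC : e \subset C :\ x.
    apply/subsetP => z ze; rewrite !inE (subsetP bC) ?andbT; last by rewrite !inE ze orbT.
    by apply/negP => /eqP ez; move: xe; rewrite -ez ze.
  rewrite ush_iterE // inE; apply/andP; split.
    by apply: setSD.
  apply/existsP; exists e; rewrite eF eC /= cardsDsub //.
  move: c; rewrite cardsDsub // cardsU1 xe (cardsD1 x C) xC.
  have := subset_leq_card eC; clia.
move=> [c cI ->].
move: cI; rewrite ush_iterE // inE => /andP [cX /existsP [e /and3P [eF ec c0]]].
have xc := notin_sub cX.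
have xe := notin_sub (hF e eF).
split.
  by rewrite subUset sub1set xX (subset_trans cX (subD1set _ _)).
apply/existsP; exists (x |: e); rewrite imset_f //=.
rewrite setUS //= cardsDsub ?setUS // !cardsU1 xe xc.
move: c0; rewrite cardsDsub //; have := subset_leq_card ec; clia.
Qed.

Lemma reduce_common (X : {set 'I_N}) x r (A : fam) : x \in X -> r.+1 <= #|X :\ x| ->
  A \subset layerX X r.+1 ->
  (forall b, b \in layerX X r.+1 :\: A -> x \in b) -> hypL X r.+1 A -> hypU X r.+1 A ->
  let Ax := [set e in layerX (X :\ x) r | x |: e \in A] in
  [/\ A = layerX (X :\ x) r.+1 :|: [set x |: e | e in Ax], hypL (X :\ x) r Ax & hypU (X :\ x) r Ax].
Proof.
move=> xX hX hA hB hL hU Ax.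
set X' := X :\ x.
have AxS : Ax \subset layerX X' r by apply/subsetP => e; rewrite inE => /andP [].
have eX' : forall (F : fam) e, F \subset layerX X' r -> e \in F -> e \subset X' /\ #|e| = r.
  by move=> F e FS /(subsetP FS); rewrite inE => /andP [? /eqP].
have addx_in : forall (F : fam) e, F \subset layerX X' r -> e \in F -> x |: e \in layerX X r.+1.
  move=> F e FS eF; have [eX ce] := eX' F e FS eF.
  rewrite inE subUset sub1set xX (subset_trans eX (subD1set _ _)) cardsU1 (notin_sub eX) ce.
  by rewrite /= add1n.
have sXX : layerX X' r.+1 \subset layerX X r.+1 by apply: layerX_sub; apply: subD1set.
have AE : A = layerX X' r.+1 :|: [set x |: e | e in Ax].
  apply/setP => a; rewrite in_setU; apply/idP/orP.
    move=> aA; have := subsetP hA a aA; rewrite inE => /andP [aX ca].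
    case xa: (x \in a).
      right; apply/imsetP; exists (a :\ x); last by rewrite setD1K.
      rewrite inE setD1K // aA andbT inE; apply/andP; split; first by apply: setSD.
      by move: ca; rewrite (cardsD1 x a) xa; clia.
    left; rewrite inE ca andbT; apply/subsetP => z za; rewrite !inE (subsetP aX) // andbT.
    by apply/negP => /eqP ez; move: xa; rewrite -ez za.
  move=> [aL|/imsetP [e eAx ->]]; last by move: eAx; rewrite inE => /andP [].
  apply/negPn/negP => naA.
  have : a \in layerX X r.+1 :\: A by rewrite in_setD naA (subsetP sXX).
  move/hB; move: aL; rewrite inE => /andP [aX' _] xa.
  by move: (notin_sub aX'); rewrite xa.
have disj : forall F : fam, F \subset layerX X' r -> layerX X' r.+1 :&: [set x |: e | e in F] = set0.
  move=> F FS; apply/setP => a; rewrite in_setI in_set0; apply/negbTE/negP => /andP [aL /imsetP [e _ ae]].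
  move: aL; rewrite inE => /andP [aX' _]; move: (notin_sub aX'); by rewrite ae setU11.
have Fcard : forall F : fam, F \subset layerX X' r -> #|[set x |: e | e in F]| = #|F|.
  by move=> F FS; apply: addx_card => e eF; have [eX _] := eX' F e FS eF; apply: notin_sub eX.
split => //.
  move=> t t0 G GS Gc.
  set F := layerX X' r.+1 :|: [set x |: e | e in G].
  have FS : F \subset layerX X r.+1.
    rewrite subUset sXX /=; apply/subsetP => b /imsetP [e eG ->]; exact: addx_in eG.
  have Fc : #|F| = #|A|.
    by rewrite AE /F !cardsU_disj ?disj // !Fcard // Gc.
  have := hL t t0 F FS Fc.
  by rewrite {1}AE !lsh_addx // leq_add2l.
move=> t t0 G GS Gc.
set Bx := layerX X' r :\: Ax.
have BxS : Bx \subset layerX X' r by apply: subsetDl.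
have BE : layerX X r.+1 :\: A = [set x |: e | e in Bx].
  apply/setP => b; apply/idP/imsetP.
    move=> bB; have xb := hB b bB.
    move: bB; rewrite in_setD => /andP [nbA bL].
    move: (bL); rewrite inE => /andP [bX cb].
    exists (b :\ x); last by rewrite setD1K.
    rewrite in_setD inE setD1K // (negbTE nbA) /= inE andbF /=.
    have -> : b :\ x \subset X :\ x by apply: setSD.
    by move: cb; rewrite (cardsD1 x b) xb /=; clia.
  move=> [e eBx ->]; rewrite in_setD (addx_in _ _ BxS eBx) andbT.
  apply/negP => hA'; move: eBx; rewrite in_setD => /andP [/negP h eL]; apply: h.
  by rewrite inE eL hA'.
have GXs : forall e, e \in G -> e \subset X' by move=> e eG; have [] := eX' G e GS eG.
have BxXs : forall e, e \in Bx -> e \subset X' by move=> e eB; have [] := eX' Bx e BxS eB.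
have := hU t t0 [set x |: e | e in G].
rewrite BE !ush_addx // !addx_card.
- apply; first by apply/subsetP => b /imsetP [e eG ->]; exact: addx_in eG.
  exact: Gc.
- move=> c; rewrite ush_iterE // inE => /andP [cX _]; exact: notin_sub cX.
- move=> c; rewrite ush_iterE // inE => /andP [cX _]; exact: notin_sub cX.
- by move=> e /BxXs; apply: notin_sub.
- by move=> e /GXs; apply: notin_sub.
Qed.

Definition img (s : {perm 'I_N}) (F : fam) : fam := [set [set s x | x in B] | B : {set 'I_N} in F].

Lemma card_ordlt k : k <= N -> #|ordlt N k| = k.
Proof.
move=> kN.
have -> : ordlt N k = [set widen_ord kN j | j : 'I_k].
  apply/setP => i; rewrite inE; apply/idP/imsetP => [ik|[j _ ->]] /=; last by [].
  by exists (Ordinal ik) => //; apply: val_inj.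
by rewrite card_imset ?card_ord //; move=> i j /(congr1 val) /= e; apply: val_inj.
Qed.

Lemma img_layer (s : {perm 'I_N}) (X Y : {set 'I_N}) r : [set s y | y in X] = Y ->
  img s (layerX X r) = layerX Y r.
Proof.
move=> sXY; apply/setP => C; apply/imsetP/idP.
  move=> [B]; rewrite inE => /andP [BX cB] ->.
  rewrite inE card_imset; last exact: perm_inj.
  by rewrite cB -sXY imsetS.
rewrite inE => /andP [CY cC].
exists [set (s^-1)%g y | y in C].
  rewrite inE card_imset ?cC; last exact: perm_inj.
  rewrite andbT; apply/subsetP => z /imsetP [y yC ->].
  have := subsetP CY y yC; rewrite -sXY => /imsetP [w wX ->]; by rewrite permK.
rewrite -imset_comp; apply/setP => y; apply/idP/imsetP => [yC|[w wC ->]].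
  by exists y => //=; rewrite permKV.
by rewrite /= permKV.
Qed.

Lemma initial0 r : colex_initial_segment r (set0 : fam).
Proof. by split; [apply: sub0set | move=> B D; rewrite in_set0]. Qed.

Lemma base_case (X : {set 'I_N}) k r (A : fam) : #|X| = k -> (A = set0 \/ A = layerX X r) ->
  exists s : {perm 'I_N}, colex_initial_segment r (img s A) /\ [set s y | y in X] = ordlt N k.
Proof.
move=> hX hA.
have kN : k <= N by rewrite -hX; have := max_card (mem X); rewrite card_ord.
have [s hs] := perm_to (etrans hX (esym (card_ordlt kN))).
exists s; split => //.
case: hA => ->; first by rewrite /img imset0; apply: initial0.
by rewrite (img_layer _ hs); apply: init_layer.
Qed.

Lemma subsingle (X : {set 'I_N}) r (A : fam) : A \subset layerX X r ->
  (forall b c, b \in layerX X r -> c \in layerX X r -> b = c) ->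
  A = set0 \/ A = layerX X r.
Proof.
move=> hA h.
case: (set_0Vmem A) => [->|[a aA]]; first by left.
right; apply/eqP; rewrite eqEsubset hA /=; apply/subsetP => b bL.
by rewrite (h b a bL (subsetP hA a aA)).
Qed.

Lemma layer_lt (X : {set 'I_N}) k r (A : fam) a b : #|X| = k.+1 -> A \subset layerX X r ->
  a \in A -> b \in layerX X r :\: A -> r <= k.
Proof.
move=> hX hA aA; rewrite in_setD => /andP [nbA]; rewrite inE => /andP [bX cb].
have := subset_leq_card bX; rewrite hX (eqP cb) leq_eqVlt => /orP [/eqP er|] //.
have bX' : b = X by apply/eqP; rewrite eqEcard bX hX (eqP cb) er leqnn.
have := subsetP hA a aA; rewrite inE => /andP [aX ca].
have aX' : a = X by apply/eqP; rewrite eqEcard aX hX (eqP ca) er leqnn.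
by move: nbA; rewrite bX' -aX' aA.
Qed.

Lemma ordltS k (hk : k < N) : ordlt N k.+1 = Ordinal hk |: ordlt N k.
Proof.
apply/setP => i; rewrite !inE ltnS leq_eqVlt.
by [].
Qed.

Lemma perm_ext (s : {perm 'I_N}) (X : {set 'I_N}) x k (hk : k < N) :
  x \in X -> [set s y | y in X :\ x] = ordlt N k ->
  let s' := (s * tperm (s x) (Ordinal hk))%g in
  [/\ s' x = Ordinal hk, {in X :\ x, forall y, s' y = s y} & [set s' y | y in X] = ordlt N k.+1].
Proof.
move=> xX hs s'.
have h1 : s' x = Ordinal hk by rewrite /s' permM tpermL.
have h2 : {in X :\ x, forall y, s' y = s y}.
  move=> y yX; rewrite /s' permM tpermD //.
    apply/negP => /eqP /perm_inj e; by move: yX; rewrite e !inE eqxx.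
  apply/negP => /eqP e.
  have : s y \in ordlt N k by rewrite -hs imset_f.
  by rewrite -e inE ltnn.
split => //.
rewrite -(setD1K xX) imsetU1 h1 ordltS -hs; congr (_ |: _).
exact: eq_in_imset.
Qed.

Theorem gen k : forall (X : {set 'I_N}) r (A : fam), #|X| = k -> A \subset layerX X r ->
  hypL X r A -> hypU X r A ->
  exists s : {perm 'I_N}, colex_initial_segment r (img s A) /\ [set s y | y in X] = ordlt N k.
Proof.
elim: k => [|k IH] X r A hX hA hL hU.
  apply: base_case => //; apply: subsingle => // b c; rewrite !inE => /andP [bX _] /andP [cX _].
  move/eqP: hX; rewrite cards_eq0 => /eqP X0.
  by move: bX cX; rewrite X0 !subset0 => /eqP -> /eqP ->.
have kN : k < N by rewrite -hX; have := max_card (mem X); rewrite card_ord.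
case: (set_0Vmem A) => [A0|[a0 a0A]]; first by apply: base_case hX (or_introl A0).
case: (set_0Vmem (layerX X r :\: A)) => [B0|[b0 b0B]].
  apply: base_case hX (or_intror _); apply/eqP; rewrite eqEsubset hA /=.
  by rewrite -setD_eq0 B0.
case: r hA hL hU a0A b0B => [|r] hA hL hU a0A b0B.
  apply: base_case => //; apply: subsingle => // b c; rewrite !inE => /andP [_ bc] /andP [_ cc].
  by move: bc cc; rewrite !cards_eq0 => /eqP -> /eqP ->.
have rk := layer_lt hX hA a0A b0B.
case: (leqP #|A| 'C(k, r.+1)) => hc.
  have [x xX hx] := exists_free hX hA hL hc.
  have [hA' hL' hU'] := reduce_free xX hA hx hL hU.
  have hX' : #|X :\ x| = k by move: hX; rewrite (cardsD1 x) xX; case.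
  have [s [sI sX]] := IH _ _ _ hX' hA' hL' hU'.
  have [h1 h2 h3] := perm_ext kN xX sX.
  set s' := (s * tperm (s x) (Ordinal kN))%g in h1 h2 h3.
  exists s'; split => //.
  suff -> : img s' A = img s A by [].
  apply: eq_in_imset => a aA; apply: eq_in_imset => y ya; apply: h2.
  by have := subsetP hA' a aA; rewrite inE => /andP [/subsetP hh _]; exact: hh.
have An : A != set0 by apply/set0Pn; exists a0.
have Bn : layerX X r.+1 :\: A != set0 by apply/set0Pn; exists b0.
have [x xX hx] := exists_common hX hA hU hc An Bn.
have hX' : #|X :\ x| = k by move: hX; rewrite (cardsD1 x) xX; case.
have rk' : r.+1 <= #|X :\ x| by rewrite hX'.
have [AE hL' hU'] := reduce_common xX rk' hA hx hL hU.
set Ax := [set e in layerX (X :\ x) r | x |: e \in A] in AE hL' hU'.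
have AxS : Ax \subset layerX (X :\ x) r by apply/subsetP => e; rewrite inE => /andP [].
have [s [sI sX]] := IH _ _ _ hX' AxS hL' hU'.
have [h1 h2 h3] := perm_ext kN xX sX.
set s' := (s * tperm (s x) (Ordinal kN))%g in h1 h2 h3.
exists s'; split => //.
have -> : img s' A = layerX (ordlt N k) r.+1 :|: [set Ordinal kN |: e | e in img s Ax].
  rewrite AE /img imsetU; congr (_ :|: _).
    apply: img_layer; rewrite -sX; exact: eq_in_imset.
  rewrite -!imset_comp; apply: eq_in_imset => e eAx /=.
  rewrite imsetU1 h1; congr (_ |: _); apply: eq_in_imset => y ye; apply: h2.
  by have := subsetP AxS e eAx; rewrite inE => /andP [/subsetP hh _]; exact: hh.
apply: init_ext => // e /imsetP [e0 e0Ax ->]; rewrite -sX; apply: imsetS.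
by have := subsetP AxS e0 e0Ax; rewrite inE => /andP [].
Qed.
End Main.

Theorem corollary7 (n r : nat) (A : {set {set 'I_n}})
  (hA : A \subset layer n r) :
  let B := layer n r :\: A in
  (forall t : nat, 0 < t -> lshadow_minimal r t A) ->
  (forall t : nat, 0 < t -> ushadow_minimal r t B) ->
  exists C : {set {set 'I_n}},
    colex_initial_segment r C /\ fam_isomorphic A C.
Proof.
move=> B hL hU.
have lay : layerX [set: 'I_n] r = layer n r.
  by apply/setP => b; rewrite !inE subsetT.
have ush : ushX [set: 'I_n] =1 @ushadow n.
  by move=> F; apply/setP => C; rewrite /ushX inE subsetT andbT.
have cX : #|[set: 'I_n]| = n by rewrite cardsT card_ord.
have hA' : A \subset layerX [set: 'I_n] r by rewrite lay.
have hL' : hypL [set: 'I_n] r A.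
  by move=> t t0 G GS Gc; apply: (hL t t0 G _ Gc); rewrite -lay.
have hU' : hypU [set: 'I_n] r A.
  move=> t t0 G GS Gc; rewrite lay !(eq_iter ush).
  by apply: (hU t t0 G); [rewrite -lay | rewrite Gc lay].
have [s [sI _]] := gen cX hA' hL' hU'.
by exists (img s A); split => //; exists s.
Qed.
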